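(* Let $M$ be a matroid, let $S,T$ be disjoint subsets of $E(M)$, let $k:=\kappa_M(S,T)$, and let $U$ be a set with $S\subseteq U\subseteq E(M)-T$ and $\lambda_M(U)=k$. If $e\in E(M)-(T\cup U)$ satisfies $\kappa_{M/e}(S,T)\neq\kappa_M(S,T)$, then $\kappa_{M/e}(U,T)\neq\kappa_M(U,T)$.
   Context: For a matroid $M$ with ground set $E$, $\lambda_M(X):=r_M(X)+r_M(E-X)-r(M)$, and for disjoint $S,T\subseteq E$, $\kappa_M(S,T):=\min\{\lambda_M(X):S\subseteq X\subseteq E-T\}$. *)

(* Defs.v *)
From mathcomp Require Import all_boot.
Set Implicit Arguments. Unset Strict Implicit. Unset Printing Implicit Defensive.

(* Values of r outside subsets of E are irrelevant. *)
Definition is_matroid (V : finType) (E : {set V}) (r : {set V} -> nat) : Prop :=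
  [/\ (forall X : {set V}, X \subset E -> r X <= #|X|),
      (forall X Y : {set V}, X \subset Y -> Y \subset E -> r X <= r Y) &
      (forall X Y : {set V}, X \subset E -> Y \subset E ->
         r (X :|: Y) + r (X :&: Y) <= r X + r Y)].

(* lambda_M(X) = r(X) + r(E - X) - r(M), with r(M) = r(E);
   nonnegative by submodularity, so truncated subtraction is harmless. *)
Definition conn (V : finType) (E : {set V}) (r : {set V} -> nat) (X : {set V}) : nat :=
  r X + r (E :\: X) - r E.

(* kappa_M(S,T) = min { lambda_M(X) : S <= X <= E - T }.  The default value
   r(E) is an upper bound of every lambda_M(X), so it does not affect the
   minimum when the range is nonempty. *)
Definition kappa (V : finType) (E : {set V}) (r : {set V} -> nat) (S T : {set V}) : nat :=
  \big[minn/r E]_(X : {set V} | (S \subset X) && (X \subset E :\: T)) conn E r X.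

Definition contr_ground (V : finType) (E : {set V}) (e : V) : {set V} := E :\ e.
Definition contr_rk (V : finType) (r : {set V} -> nat) (e : V) (X : {set V}) : nat :=
  r (X :|: [set e]) - r [set e].

(* Main.v *)
Require Import Defs.
From mathcomp Require Import all_boot.
From mathcomp Require Import zify.
Set Implicit Arguments. Unset Strict Implicit.

Section Gen.
Variable V : finType.
Implicit Types (P : pred {set V}) (F : {set V} -> nat).

Lemma bm_le P F d Y : P Y -> \big[minn/d]_(X | P X) F X <= F Y.
Proof.
move=> PY; rewrite -big_filter.
have : Y \in [seq X <- index_enum {set V} | P X] by rewrite mem_filter PY mem_index_enum.
elim: [seq X <- _ | _] => [//|a s IH]; rewrite in_cons big_cons.
case/orP => [/eqP ->|/IH h]; first by rewrite geq_minl.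
by rewrite geq_min h orbT.
Qed.

Lemma bm_ge P F d k : k <= d -> (forall Y, P Y -> k <= F Y) ->
  k <= \big[minn/d]_(X | P X) F X.
Proof.
move=> kd H; apply: (big_ind (fun x => k <= x)) => //.
  by move=> x y hx hy; rewrite leq_min hx hy.
Qed.

Lemma bm_lt P F d k : \big[minn/d]_(X | P X) F X < k ->
  d < k \/ exists Y, P Y /\ F Y < k.
Proof.
move=> h; case: (ltnP d k) => [|hd]; [by left|right].
case: (boolP [exists Y, P Y && (F Y < k)]) => [/existsP [Y /andP [a b]]|hn].
  by exists Y.
exfalso; move: h; rewrite ltnNge bm_ge //.
move=> Y PY; rewrite leqNgt; apply/negP => hl; move/negP: hn; apply.
by apply/existsP; exists Y; rewrite PY hl.
Qed.
End Gen.

Section M.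
Variables (V : finType) (E : {set V}) (r : {set V} -> nat).
Hypothesis hm : is_matroid E r.

Lemma r0 : r set0 = 0.
Proof. case: hm => h _ _; have := h set0 (sub0set E); rewrite cards0; lia. Qed.

Lemma rmono (X Y : {set V}) : X \subset Y -> Y \subset E -> r X <= r Y.
Proof. by case: hm => _ h _; apply: h. Qed.

Lemma rsub (X Y : {set V}) : X \subset E -> Y \subset E -> r (X :|: Y) + r (X :&: Y) <= r X + r Y.
Proof. by case: hm => _ _ h; apply: h. Qed.

Lemma connE (Y : {set V}) : Y \subset E -> conn E r Y + r E = r Y + r (E :\: Y).
Proof.
move=> hY; rewrite /conn.
have := rsub hY (subsetDl E Y).
have -> : Y :|: E :\: Y = E by apply/setP=> x; rewrite !inE; case: (boolP (x \in Y)) => // /(subsetP hY) ->.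
have -> : Y :&: (E :\: Y) = set0 by apply/setP=> x; rewrite !inE; case: (x \in Y).
rewrite r0; lia.
Qed.

Lemma conn_le (Y : {set V}) : Y \subset E -> conn E r Y <= r E.
Proof.
move=> hY; have := connE hY; have := rmono hY (subxx E);
have := rmono (subsetDl E Y) (subxx E); lia.
Qed.

Variable e : V.
Hypothesis heE : e \in E.
Let se : [set e] \subset E. Proof. by rewrite sub1set. Qed.

Lemma radd1 (A : {set V}) : A \subset E -> r (A :|: [set e]) <= r A + r [set e].
Proof. move=> hA; have := rsub hA se; lia. Qed.

Lemma conn'E (Y : {set V}) : Y \subset E -> e \notin Y ->
  conn (contr_ground E e) (contr_rk r e) Y + r [set e] + r E
  = r (Y :|: [set e]) + r (E :\: Y).
Proof.
move=> hY heY; rewrite /conn /contr_rk /contr_ground.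
have -> : E :\ e :\: Y :|: [set e] = E :\: Y.
  apply/setP=> x; rewrite !inE; case: eqP => [->|]; rewrite ?heE ?(negbTE heY) //.
  by rewrite orbF.
have -> : E :\ e :|: [set e] = E.
  apply/setP=> x; rewrite !inE; case: eqP => [->|]; rewrite ?heE //; by rewrite orbF.
have hYe : Y :|: [set e] \subset E by rewrite subUset hY se.
have hEY : E :\: Y \subset E := subsetDl E Y.
have := rsub hYe hEY.
have -> : Y :|: [set e] :|: E :\: Y = E.
  apply/setP=> x; rewrite !inE; case: (boolP (x \in Y)) => [/(subsetP hY) ->|]; rewrite ?orbT //=.
  by case: eqP => [->|]; rewrite ?heE.
have -> : (Y :|: [set e]) :&: (E :\: Y) = [set e].
  apply/setP=> x; rewrite !inE; case: eqP => [->|]; rewrite ?heE ?(negbTE heY) //=.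
  by rewrite orbF; case: (x \in Y); rewrite ?andbF.
have := rmono (subsetUr Y [set e]) hYe.
have : [set e] \subset E :\: Y by rewrite sub1set !inE heE heY.
move/rmono/(_ hEY).
move=> *; have := rmono se (subxx E); lia.
Qed.

End M.

Theorem lemma3p6 (V : finType) (E : {set V}) (r : {set V} -> nat)
  (S T U : {set V}) (e : V) :
  is_matroid E r ->
  S \subset E -> T \subset E -> [disjoint S & T] ->
  S \subset U -> U \subset E :\: T ->
  conn E r U = kappa E r S T ->
  e \in E :\: (T :|: U) ->
  kappa (contr_ground E e) (contr_rk r e) S T <> kappa E r S T ->
  kappa (contr_ground E e) (contr_rk r e) U T <> kappa E r U T.
Proof.
move=> hm hS hT hdisj hSU hU hk he hne.
have heE : e \in E by move: he; rewrite !inE => /andP [].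
have heU : e \notin U by move: he; rewrite !inE negb_or => /andP [/andP [_ ->]].
have heT : e \notin T by move: he; rewrite !inE negb_or => /andP [/andP [->]].
have hUE : U \subset E := subset_trans hU (subsetDl E T).
have heS : e \notin S by apply/negP => /(subsetP hSU); apply/negP.
have hU' : U \subset (E :\ e) :\: T.
  apply/subsetP=> x hx; move/subsetP: hU => /(_ x hx); rewrite !inE => /andP [-> ->].
  by rewrite andbT; apply/negP => /eqP ex; move: heU; rewrite -ex hx.
have hS' : S \subset (E :\ e) :\: T := subset_trans hSU hU'.
set k := kappa E r S T.
set k' := kappa (contr_ground E e) (contr_rk r e) S T.
have hkU : k <= kappa E r U T.
  apply: bm_ge; first by rewrite /k -hk; apply: conn_le.
  move=> Y /andP [hUY hY]; apply: bm_le; by rewrite (subset_trans hSU hUY).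
have hcS' : conn (contr_ground E e) (contr_rk r e) S <= r E.
  have := conn'E hm heE (subset_trans hSU hUE) heS.
  have := rmono hm (subsetDl E S) (subxx E).
  have : S :|: [set e] \subset E by rewrite subUset (subset_trans hSU hUE) sub1set heE.
  move/(rmono hm)/(_ (subxx E))=> h1 h2 h3; clear -h1 h2 h3; lia.
have hk'k : k' <= k.
  apply: bm_ge.
    apply: leq_trans hcS'; apply: bm_le; by rewrite subxx hS'.
  move=> Y /andP [hSY hY].
  have hYE : Y \subset E := subset_trans hY (subsetDl E T).
  case: (boolP (e \in Y)) => heY.
  - have hY' : Y :\ e \subset E := subset_trans (subsetDl Y [set e]) hYE.
    have hYY : S \subset Y :\ e.
      apply/subsetP=> x hx; rewrite !inE (subsetP hSY) // andbT.
      by apply/negP => /eqP ex; move: heS; rewrite -ex hx.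
    apply: (@leq_trans (conn (contr_ground E e) (contr_rk r e) (Y :\ e))).
      apply: bm_le; rewrite hYY /=.
      apply/subsetP=> x; rewrite !inE => /andP [-> hx]; move/subsetP: hY => /(_ x hx).
      by rewrite !inE => /andP [-> ->].
    have := conn'E hm heE hY' (negbT (setD11 e Y)).
    have -> : Y :\ e :|: [set e] = Y.
      by apply/setP=> x; rewrite !inE; case: eqP => [->|]; rewrite ?heY ?orbF.
    have -> : E :\: (Y :\ e) = (E :\: Y) :|: [set e].
      apply/setP=> x; rewrite !inE; case: eqP => [->|]; rewrite ?heE ?heY //=.
      by rewrite orbF.
    have := radd1 hm heE (subsetDl E Y).
    have := connE hm hYE=> h1 h2 h3; clear -h1 h2 h3; lia.
  - apply: (@leq_trans (conn (contr_ground E e) (contr_rk r e) Y)).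
      apply: bm_le; rewrite hSY /=.
      apply/subsetP=> x hx; move/subsetP: hY => /(_ x hx); rewrite !inE => /andP [-> ->].
      by rewrite andbT; apply/negP => /eqP ex; move: heY; rewrite -ex hx.
    have := conn'E hm heE hYE heY.
    have := radd1 hm heE hYE.
    have := connE hm hYE=> h1 h2 h3; clear -h1 h2 h3; lia.
have hlt : k' < k by rewrite ltn_neqAle hk'k andbT; apply/eqP.
have [X [/andP [hSX hX] hXk]] : exists X : {set V}, ((S \subset X) && (X \subset (E :\ e) :\: T))
    /\ conn (contr_ground E e) (contr_rk r e) X < k.
  case: (bm_lt hlt) => [hd|]; last by [].
  exists S; rewrite subxx hS' /=; split=> //; apply: (leq_ltn_trans _ hd).
  have -> : contr_rk r e (contr_ground E e) = r E - r [set e].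
    rewrite /contr_rk /contr_ground.
    have -> : E :\ e :|: [set e] = E.
      by apply/setP=> x; rewrite !inE; case: eqP => [->|]; rewrite ?heE ?orbF.
    by [].
  have := conn'E hm heE (subset_trans hSU hUE) heS.
  have := rmono hm (subsetDl E S) (subxx E).
  have : S :|: [set e] \subset E by rewrite subUset (subset_trans hSU hUE) sub1set heE.
  move/(rmono hm)/(_ (subxx E))=> h1 h2 h3; clear -h1 h2 h3; lia.
have hXE : X \subset E by apply: subset_trans hX _; apply/subsetP=> x; rewrite !inE => /andP [_ /andP [_ ->]].
have heX : e \notin X by apply/negP => /(subsetP hX); rewrite !inE eqxx andbF.
have hXU' : X :|: U \subset (E :\ e) :\: T by rewrite subUset hX hU'.
apply/eqP; rewrite neq_ltn; apply/orP; left.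
apply: (@leq_ltn_trans (conn (contr_ground E e) (contr_rk r e) (X :|: U))).
  by apply: bm_le; rewrite subsetUr hXU'.
apply: (leq_trans _ hkU); apply: (leq_ltn_trans _ hXk).
have hXUE : X :|: U \subset E by rewrite subUset hXE hUE.
have heXU : e \notin X :|: U by rewrite inE negb_or heX heU.
have hIE : X :&: U \subset E := subset_trans (subsetIl X U) hXE.
have c1 := conn'E hm heE hXE heX.
have c2 := conn'E hm heE hXUE heXU.
have c3 := connE hm hUE.
have hIe : X :&: U :|: [set e] \subset E by rewrite subUset hIE sub1set heE.
have c4 := connE hm hIe.
have hk4 : k <= conn E r (X :&: U :|: [set e]).
  apply: bm_le; apply/andP; split.
    by apply: (subset_trans _ (subsetUl _ _)); rewrite subsetI hSX hSU.
  rewrite subUset; apply/andP; split; last by rewrite sub1set !inE heE heT.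
  apply/subsetP=> x; rewrite !inE => /andP [hx _]; move/subsetP: hX => /(_ x hx).
  by rewrite !inE => /andP [-> /andP [_ ->]].
have m1 : r (E :\: (X :&: U :|: [set e])) <= r (E :\: (X :&: U)).
  apply: (rmono hm _ (subsetDl _ _)); apply/subsetP=> x; rewrite !inE.
  by case/andP => /norP [/negbTE -> _] ->.
have hXe : X :|: [set e] \subset E by rewrite subUset hXE sub1set heE.
have hUe : U :|: [set e] \subset E by rewrite subUset hUE sub1set heE.
have s1 := rsub hm hXe hUe.
have eq1 : X :|: [set e] :|: (U :|: [set e]) = X :|: U :|: [set e].
  by apply/setP=> x; rewrite !inE; case: (x \in X); case: (x \in U); case: (x == e).
rewrite eq1 in s1.
have eq2 : (X :|: [set e]) :&: (U :|: [set e]) = X :&: U :|: [set e].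
  by apply/setP=> x; rewrite !inE; case: (x \in X); case: (x \in U); case: (x == e).
rewrite eq2 in s1.
have s2 := rsub hm (subsetDl E X) (subsetDl E U).
have eq3 : E :\: X :|: E :\: U = E :\: (X :&: U).
  by apply/setP=> x; rewrite !inE; case: (x \in X); case: (x \in U); case: (x \in E).
rewrite eq3 in s2.
have eq4 : (E :\: X) :&: (E :\: U) = E :\: (X :|: U).
  by apply/setP=> x; rewrite !inE; case: (x \in X); case: (x \in U); case: (x \in E).
rewrite eq4 in s2.
have s3 := rsub hm hIe hUE.
have eq5 : X :&: U :|: [set e] :|: U = U :|: [set e].
  by apply/setP=> x; rewrite !inE; case: (x \in X); case: (x \in U); case: (x == e).
have eq6 : (X :&: U :|: [set e]) :&: U = X :&: U.
  apply/setP=> x; rewrite !inE; case: eqP => [->|]; last by case: (x \in X); case: (x \in U).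
  by rewrite (negbTE heU) !andbF.
rewrite eq5 eq6 in s3.
have c5 := connE hm hIE.
have hk5 : k <= conn E r (X :&: U).
  apply: bm_le; apply/andP; split; first by rewrite subsetI hSX hSU.
  exact: subset_trans (subsetIr X U) hU.
move: hk5 hk hXk c1 c2 c3 c5 s1 s2 s3; rewrite -/k; clear; lia.
Qed.
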